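(* Let $(a,b,c)$ be a cyclic triple, assume (AW), that $(A^a,A^b)$ is a Leonard pair as in the context, and that $(A^c,A^a)$ is also a Leonard pair with eigenvalue orderings $\theta^c_0,\dots,\theta^c_{2s}$ and $\theta^a_0,\dots,\theta^a_{2s}$ (for which the other operator acts irreducibly tridiagonally). Let $\{|\theta^a_M\rangle\}$ be the eigenbasis of $A^a$ attached to the pair $(A^a,A^b)$ (described in the context). Then for $0\le M\le 2s$, $$A^c|\theta^a_M\rangle=A^{(c,a)}_{M+1,M}\,\mathfrak f(M)\,|\theta^a_{M+1}\rangle+A^{(c,a)}_{M,M}|\theta^a_M\rangle+A^{(c,a)}_{M-1,M}\,\mathfrak f(M-1)^{-1}|\theta^a_{M-1}\rangle,$$ where $\mathfrak f(k)=\dfrac{\mathsf c^aq^{-2k-2}+r_0q^{-1}\mathsf c^b\mathsf b^c}{\mathsf b^aq^{2k}+r_0q^{-1}\mathsf c^b\mathsf b^c}$ (the last term is absent for $M=0$). Equivalently, with $f_M=f_0\prod_{k=0}^{M-1}\mathfrak f(k)$ for any $f_0\neq0$, the vectors $f_M|\theta^a_M\rangle$ form an eigenbasis of $A^a$ on which $A^c$ acts with the coefficients $A^{(c,a)}$.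
   Context: $q\in\mathbb C^*$ is not a root of unity, $s\in\{0,\tfrac12,1,\dots\}$, $\mathcal V$ a complex vector space of dimension $2s+1$ with identity $\mathbb I$; $[X,Y]_q=qXY-q^{-1}YX$. Labels range over $\{\cdot,*,\diamond\}$; $A^{\cdot}=A$, $\mathsf b^\cdot=\mathsf b$, $\mathsf c^\cdot=\mathsf c$. Fix nonzero $r_0,\mathsf b^a,\mathsf c^a$ with $r_0^{-2}=\mathsf b\mathsf c=\mathsf b^*\mathsf c^*=\mathsf b^\diamond\mathsf c^\diamond$; $\theta^a_M=\mathsf b^aq^{2M}+\mathsf c^aq^{-2M}$; for distinct $a,b,c$, $\omega^{\{a,b,c\}}=-(q-q^{-1})^2(\theta^a_s\theta^b_s-r_0^{-1}(q^{2s+1}+q^{-2s-1})\theta^c_s)$. For $A,A^*\in\mathrm{End}(\mathcal V)$ set $A^\diamond=\frac{r_0}{q^2-q^{-2}}[A^*,A]_q+\frac{r_0\omega^{\{\cdot,*,\diamond\}}}{(q-q^{-1})(q^2-q^{-2})}\mathbb I$. Hypothesis (AW): for every ordered pair $(a,b)$ of distinct labels, $c$ the remaining one, $[A^a,[A^a,A^b]_q]_{q^{-1}}=-\frac{(q^2-q^{-2})^2}{r_0^2}A^b+\omega^{\{a,b,c\}}A^a+\frac{q+q^{-1}}{r_0}\omega^{\{a,c,b\}}\mathbb I$. A Leonard pair on $\mathcal V$ is a pair of diagonalizable operators such that each has an eigenbasis in which the other is represented by an irreducible tridiagonal matrix. A cyclic triple is one of $(\cdot,*,\diamond),( *,\diamond,\cdot),(\diamond,\cdot,*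 )$. Coefficients: for a cyclic triple $(a,b,c)$, $A^{(b,a)}_{M,M-1}=q^{2-4s}\frac{(1-q^{2M})(\mathsf c^a-\mathsf b^aq^{2M+4s})(\mathsf b^b\mathsf b^cr_0q^{4s-1}+\mathsf b^aq^{2M-2})(\mathsf c^a\mathsf c^cr_0q^{-1}+\mathsf c^bq^{2M-2})}{(\mathsf c^a-\mathsf b^aq^{4M-2})(\mathsf c^a-\mathsf b^aq^{4M})}$, $A^{(b,a)}_{M-1,M}=\frac{(1-q^{2M-4s-2})(\mathsf c^a-\mathsf b^aq^{2M-2})(\mathsf c^a+\mathsf b^b\mathsf b^cr_0q^{2M+4s-1})(\mathsf c^b+\mathsf b^a\mathsf c^cr_0q^{2M-1})}{(\mathsf c^a-\mathsf b^aq^{4M-4})(\mathsf c^a-\mathsf b^aq^{4M-2})}$, $A^{(b,a)}_{M,M}=\theta^b_0-A^{(b,a)}_{M,M+1}-A^{(b,a)}_{M,M-1}$; coefficients with indices outside $\{0,\dots,2s\}$ are $0$. $A^{(a,b)}_{M,N}$ is the image of $A^{(b,a)}_{M,N}$ under $\mathsf b^a\leftrightarrow\mathsf b^b$, $\mathsf c^a\leftrightarrow\mathsf c^b$, $\mathsf b^c\mapsto q^{-4s}\mathsf c^c$, $\mathsf c^c\mapsto q^{4s}\mathsf b^c$. This defines $A^{(x,y)}$ for all six ordered pairs of distinct labels (in particular $A^{(c,a)}$ is obtained from the cyclic triple $(c,a,b)$). Bases attached to a Leonard pair: for cyclic $(a,b,c)$ with $(A^a,A^b)$ a Leonard pair (eigenvalue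 orderings $\theta^a_M,\theta^b_M$), there are bases $\{|\theta^a_M\rangle\}$, $\{|\theta^b_M\rangle\}$ with $A^a|\theta^a_M\rangle=\theta^a_M|\theta^a_M\rangle$, $A^b|\theta^a_M\rangle=A^{(b,a)}_{M+1,M}|\theta^a_{M+1}\rangle+A^{(b,a)}_{M,M}|\theta^a_M\rangle+A^{(b,a)}_{M-1,M}|\theta^a_{M-1}\rangle$, $A^b|\theta^b_M\rangle=\theta^b_M|\theta^b_M\rangle$, $A^a|\theta^b_M\rangle=A^{(a,b)}_{M+1,M}|\theta^b_{M+1}\rangle+A^{(a,b)}_{M,M}|\theta^b_M\rangle+A^{(a,b)}_{M-1,M}|\theta^b_{M-1}\rangle$; these are the bases ''attached to the pair $(A^a,A^b)$''. *)

(* Defs.v *)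
(* The complex numbers are modelled as  R[i]  (real_closed's
   complex) over an arbitrary  R : realType  (any realType is isomorphic to the
   reals, so R[i] is the field of complex numbers). *)
From HB Require Import structures.
From mathcomp Require Import all_boot all_order all_algebra.
From mathcomp Require Import complex.
From mathcomp Require Import reals.

Set Implicit Arguments.
Unset Strict Implicit.
Unset Printing Implicit Defensive.

Import Order.TTheory GRing.Theory Num.Theory.
Local Open Scope ring_scope.

Inductive label := Ldot | Lstar | Ldiam.

Definition third (x y : label) : label :=
  match x, y with
  | Ldot, Lstar | Lstar, Ldot => Ldiam
  | Ldot, Ldiam | Ldiam, Ldot => Lstar
  | _, _ => Ldot
  end.

Definition cyclic3 (a b c : label) : Prop :=
  (a, b, c) = (Ldot, Lstar, Ldiam) \/ (a, b, c) = (Lstar, Ldiam, Ldot) \/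
  (a, b, c) = (Ldiam, Ldot, Lstar).

Section Defs.
Variable C : fieldType.

Definition not_root_of_unity (q : C) : Prop := forall k : nat, (0 < k)%N -> q ^+ k != 1.

Definition qcomm (q : C) (n : nat) (X Y : 'M[C]_n) : 'M[C]_n :=
  q *: (X *m Y) - q^-1 *: (Y *m X).

(* Throughout, N stands for 2s (so dim V = N+1), q, r0 are the parameters and
   bv l, cv l stand for b^l, c^l. *)
Variables (q r0 : C) (N : nat) (bv cv : label -> C).

(* b q^k + c q^{-k};  theta^l_M = thetaE l (2M),  theta^l_s = thetaE l N *)
Definition thetaE (l : label) (k : int) : C := bv l * q ^ k + cv l * q ^ (- k).
Definition theta (l : label) (M : int) : C := thetaE l (2 * M).

Definition omega (x y z : label) : C :=
  - (q - q^-1) ^+ 2 *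
    (thetaE x N%:Z * thetaE y N%:Z
     - r0^-1 * (q ^ (N%:Z + 1) + q ^ (- (N%:Z + 1))) * thetaE z N%:Z).

Definition Aop (A As : 'M[C]_N.+1) (l : label) : 'M[C]_N.+1 :=
  match l with
  | Ldot => A
  | Lstar => As
  | Ldiam => (r0 / (q ^+ 2 - q ^- 2)) *: qcomm q As A
             + (r0 * omega Ldot Lstar Ldiam / ((q - q^-1) * (q ^+ 2 - q ^- 2)))%:M
  end.

Definition AW (A As : 'M[C]_N.+1) : Prop :=
  forall x y : label, x <> y ->
    let z := third x y in
    qcomm q^-1 (Aop A As x) (qcomm q (Aop A As x) (Aop A As y)) =
      (- (q ^+ 2 - q ^- 2) ^+ 2 / r0 ^+ 2) *: Aop A As y
      + omega x y z *: Aop A As x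
      + ((q + q^-1) / r0 * omega x z y)%:M.

(* The coefficient family A^{(b,a)} for a cyclic triple (a,b,c), written as a
   function of the six parameters b^a,c^a,b^b,c^b,b^c,c^c (4s = 2N).
   Indices are integers; entries with an index outside {0..N} are 0. *)
Section Coef.
Variables (ba ca bb cb bc cc : C).

Definition coef_low (M : int) : C :=
  q ^ (2 - 2 * N%:Z) * (1 - q ^ (2 * M)) * (ca - ba * q ^ (2 * M + 2 * N%:Z))
  * (bb * bc * r0 * q ^ (2 * N%:Z - 1) + ba * q ^ (2 * M - 2))
  * (ca * cc * r0 * q^-1 + cb * q ^ (2 * M - 2))
  / ((ca - ba * q ^ (4 * M - 2)) * (ca - ba * q ^ (4 * M))).

Definition coef_up (M : int) : C :=
  (1 - q ^ (2 * M - 2 * N%:Z - 2)) * (ca - ba * q ^ (2 * M - 2))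
  * (ca + bb * bc * r0 * q ^ (2 * M + 2 * N%:Z - 1))
  * (cb + ba * cc * r0 * q ^ (2 * M - 1))
  / ((ca - ba * q ^ (4 * M - 4)) * (ca - ba * q ^ (4 * M - 2))).

Definition in_range (i : int) : bool := (0 <= i) && (i <= N%:Z).

Definition coef_diag (M : int) : C :=
  (bb + cb) - (if in_range (M + 1) then coef_up (M + 1) else 0)
            - (if in_range (M - 1) then coef_low M else 0).

Definition coefT (i j : int) : C :=
  if in_range i && in_range j then
    if i == j + 1 then coef_low i
    else if j == i + 1 then coef_up j
    else if i == j then coef_diag i
    else 0
  else 0.
End Coef.

(* For a cyclic triple (a,b,c):  A^{(b,a)} = Aba a b c,  A^{(a,b)} = Aab a b c.
   In particular A^{(c,a)} = Aab c a b (cyclic triple (c,a,b)). *)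
Definition Aba (a b c : label) : int -> int -> C :=
  coefT (bv a) (cv a) (bv b) (cv b) (bv c) (cv c).
Definition Aab (a b c : label) : int -> int -> C :=
  coefT (bv b) (cv b) (bv a) (cv a) (q ^ (- (2 * N%:Z)) * cv c) (q ^ (2 * N%:Z) * bv c).

End Defs.

Section Lin.
Variables (C : fieldType) (n : nat).

Definition colmx (v : nat -> 'cV[C]_n) : 'M[C]_n := \matrix_(i < n, j < n) v j i 0.

Definition is_basis (v : nat -> 'cV[C]_n) : Prop := colmx v \in unitmx.

Definition mx_in_basis (B : 'M[C]_n) (v : nat -> 'cV[C]_n) : 'M[C]_n :=
  invmx (colmx v) *m B *m colmx v.

Definition irred_tridiag (T : 'M[C]_n) : Prop :=
  (forall i j : 'I_n, (i.+1 < j)%N \/ (j.+1 < i)%N -> T i j = 0) /\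
  (forall i j : 'I_n, (i.+1 == j)%N || (j.+1 == i)%N -> T i j != 0).

Definition eigen_seq (B : 'M[C]_n) (v : nat -> 'cV[C]_n) (th : nat -> C) : Prop :=
  forall M : nat, (M < n)%N -> B *m v M = th M *: v M.

Definition leonard_pair_ord (B1 B2 : 'M[C]_n) (th1 th2 : nat -> C) : Prop :=
  (exists v, is_basis v /\ eigen_seq B1 v th1 /\ irred_tridiag (mx_in_basis B2 v)) /\
  (exists w, is_basis w /\ eigen_seq B2 w th2 /\ irred_tridiag (mx_in_basis B1 w)).

(* B v_M = T(M+1,M) v_{M+1} + T(M,M) v_M + T(M-1,M) v_{M-1}  for M = 0..n-1
   (T vanishes at out-of-range indices, so v (n) and v (0.-1) are irrelevant) *)
Definition acts_tridiag (B : 'M[C]_n) (v : nat -> 'cV[C]_n) (T : int -> int -> C) : Prop :=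
  forall M : nat, (M < n)%N ->
    B *m v M = T (M.+1)%:Z M%:Z *: v M.+1 + T M%:Z M%:Z *: v M
               + T (M%:Z - 1) M%:Z *: v M.-1.
End Lin.

Section Attached.
Variables (C : fieldType) (q r0 : C) (N : nat) (bv cv : label -> C).

Definition attached_bases (A As : 'M[C]_N.+1) (a b c : label)
    (v w : nat -> 'cV[C]_N.+1) : Prop :=
  is_basis v /\ is_basis w /\
  eigen_seq (Aop q r0 bv cv A As a) v (fun M => theta q bv cv a M%:Z) /\
  acts_tridiag (Aop q r0 bv cv A As b) v (Aba q r0 N bv cv a b c) /\
  eigen_seq (Aop q r0 bv cv A As b) w (fun M => theta q bv cv b M%:Z) /\
  acts_tridiag (Aop q r0 bv cv A As a) w (Aab q r0 N bv cv a b c).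

Definition gauge (a b c : label) (k : int) : C :=
  (cv a * q ^ (- 2 * k - 2) + r0 * q^-1 * cv b * bv c)
  / (bv a * q ^ (2 * k) + r0 * q^-1 * cv b * bv c).
End Attached.

(* Main.v *)
Require Import Defs.
From HB Require Import structures.
From mathcomp Require Import all_boot all_order all_algebra.
From mathcomp Require Import ring zify.
From Stdlib Require Import Lia.
From mathcomp Require Import complex.
From mathcomp Require Import reals.
Import Order.TTheory GRing.Theory Num.Theory.
Local Open Scope ring_scope.

Lemma ezL (C : fieldType) (x : C) (c : int) (n : nat) : x ^ (c * n%:Z) = (x ^+ n) ^ c.
Proof. by rewrite mulrC -exprz_exp. Qed.
Lemma ezN (C : fieldType) (x : C) (c : int) : x ^ (- c) = (x ^ c)^-1.
Proof. by rewrite invr_expz. Qed.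
Lemma ezP (C : fieldType) (x : C) (n : nat) : x ^ (n%:Z) = x ^+ n.
Proof. by []. Qed.
Lemma ezF (C : fieldType) (x : C) (n m : nat) : x ^- (n * m) = ((x ^+ n) ^+ m)^-1.
Proof. by rewrite exprM. Qed.
Lemma PoszS' (n : nat) : Posz n.+1 = n%:Z + 1.
Proof. by rewrite -addn1 PoszD. Qed.

Ltac qnorm := rewrite ?PoszS' ?(@mulrDr int, @mulrBr int, @mulNr int, @mulrN int, @opprD int, @opprK int, @mulr1 int);
  rewrite ?expfzDr //; rewrite ?ezN ?ezL ?ezN ?ezP ?ezF ?(addSn, add0n).


Lemma nzK (C : fieldType) (e d u : C) : u != 0 -> d != 0 -> e * u = d -> e != 0.
Proof. move=> hu hd E; apply: contraNneq hd => e0; by rewrite -E e0 mul0r. Qed.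

Lemma coef_low_nz (C : fieldType) (q r0 : C) N ba ca bb cb bc cc M :
  coef_low q r0 N ba ca bb cb bc cc M != 0 ->
  [/\ (1 - q ^ (2 * M)) != 0, (ca - ba * q ^ (2 * M + 2 * N%:Z)) != 0,
      (bb * bc * r0 * q ^ (2 * N%:Z - 1) + ba * q ^ (2 * M - 2)) != 0 &
      [/\ (ca * cc * r0 * q^-1 + cb * q ^ (2 * M - 2)) != 0,
      (ca - ba * q ^ (4 * M - 2)) != 0 & (ca - ba * q ^ (4 * M)) != 0]].
Proof.
rewrite /coef_low => h; split; try split; apply: contraNneq h => ->;
  by rewrite ?(mulr0, mul0r, invr0, mulrA).
Qed.

Lemma coef_up_nz (C : fieldType) (q r0 : C) N ba ca bb cb bc cc M :
  coef_up q r0 N ba ca bb cb bc cc M != 0 ->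
  [/\ (1 - q ^ (2 * M - 2 * N%:Z - 2)) != 0, (ca - ba * q ^ (2 * M - 2)) != 0,
      (ca + bb * bc * r0 * q ^ (2 * M + 2 * N%:Z - 1)) != 0 &
      [/\ (cb + ba * cc * r0 * q ^ (2 * M - 1)) != 0,
      (ca - ba * q ^ (4 * M - 4)) != 0 & (ca - ba * q ^ (4 * M - 2)) != 0]].
Proof.
rewrite /coef_up => h; split; try split; apply: contraNneq h => ->;
  by rewrite ?(mulr0, mul0r, invr0, mulrA).
Qed.


Ltac nz h U := apply: (@nzK _ _ _ U _ h); [ rewrite ?invr_eq0; repeat apply: mulf_neq0; rewrite ?expf_neq0 ?oner_neq0 // | field; repeat (apply/andP; split); done ].

Lemma id1 (C : fieldType) (q r0 : C) (N : nat) (bv cv : label -> C) (a b c : label) (M : nat) :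
  q != 0 -> r0 != 0 -> bv a != 0 -> bv b != 0 -> bv c != 0 ->
  cv a = (r0^+2 * bv a)^-1 -> cv b = (r0^+2 * bv b)^-1 -> cv c = (r0^+2 * bv c)^-1 ->
  q ^+ 2 != 1 -> q ^+ 4 != 1 ->
  coef_low q r0 N (bv a) (cv a) (bv b) (cv b) (bv c) (cv c) (M.+1)%:Z != 0 ->
  coef_up q r0 N (bv a) (cv a) (bv b) (cv b) (bv c) (cv c) (M.+1)%:Z != 0 ->
 r0/(q^+2 - q^-2) * (q * theta q bv cv a M%:Z - q^-1 * theta q bv cv a (M.+1)%:Z) * coef_low q r0 N (bv a) (cv a) (bv b) (cv b) (bv c) (cv c) (M.+1)%:Z
 = coef_low q r0 N (bv a) (cv a) (bv c) (cv c) (q ^ (- (2 * N%:Z)) * cv b) (q ^ (2 * N%:Z) * bv b) (M.+1)%:Z * gauge q r0 bv cv a b c M%:Z.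
Proof.
move=> hq hr ha hb hc ea eb ec hq2 hq4 /coef_low_nz[l1 l2 l3 [l4 l5 l6]] /coef_up_nz[u1 u2 u3 [u4 u5 u6]].
rewrite /coef_low /theta /thetaE /gauge ea eb ec.
move: l1 l2 l3 l4 l5 l6 u1 u2 u3 u4 u5 u6; rewrite ea eb ec. qnorm.
set x := q ^+ M. set y := q ^+ N. move=> l1 l2 l3 l4 l5 l6 u1 u2 u3 u4 u5 u6.
have hx : x != 0 by rewrite expf_neq0.
have hy : y != 0 by rewrite expf_neq0.
have hq4' : q ^+ 4 - 1 != 0 by rewrite subr_eq0.
have nA : bv a * x ^+ 2 * (q * (r0 * bv b)) + bv c != 0 by nz u4 (r0^+2 * bv b * bv c)^-1.
have nB : 1 + - (bv a * (x ^+ 4 * (q * (q * (q * q))))) * (r0 ^+ 2 * bv a) != 0 by nz l6 (r0^+2 * bv a)^-1.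
have nC : 1 + - (bv a * (x ^+ 4 * (q * q))) * (r0 ^+ 2 * bv a) != 0 by nz l5 (r0^+2 * bv a)^-1.
have nD : (q * q) ^+ 2 - 1 != 0 by nz hq4' (1:C).
field; by rewrite ?hq ?hr ?ha ?hb ?hc ?hx ?hy ?nA ?nB ?nC ?nD.
Qed.

Lemma id2 (C : fieldType) (q r0 : C) (N : nat) (bv cv : label -> C) (a b c : label) (M : nat) :
  q != 0 -> r0 != 0 -> bv a != 0 -> bv b != 0 -> bv c != 0 ->
  cv a = (r0^+2 * bv a)^-1 -> cv b = (r0^+2 * bv b)^-1 -> cv c = (r0^+2 * bv c)^-1 ->
  q ^+ 2 != 1 -> q ^+ 4 != 1 ->
  coef_low q r0 N (bv a) (cv a) (bv b) (cv b) (bv c) (cv c) (M.+1)%:Z != 0 ->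
  coef_up q r0 N (bv a) (cv a) (bv b) (cv b) (bv c) (cv c) (M.+1)%:Z != 0 ->
 r0/(q^+2 - q^-2) * (q * theta q bv cv a (M.+1)%:Z - q^-1 * theta q bv cv a M%:Z) * coef_up q r0 N (bv a) (cv a) (bv b) (cv b) (bv c) (cv c) (M.+1)%:Z
 = coef_up q r0 N (bv a) (cv a) (bv c) (cv c) (q ^ (- (2 * N%:Z)) * cv b) (q ^ (2 * N%:Z) * bv b) (M.+1)%:Z / gauge q r0 bv cv a b c M%:Z.
Proof.
move=> hq hr ha hb hc ea eb ec hq2 hq4 /coef_low_nz[l1 l2 l3 [l4 l5 l6]] /coef_up_nz[u1 u2 u3 [u4 u5 u6]].
rewrite /coef_up /theta /thetaE /gauge ea eb ec.
move: l1 l2 l3 l4 l5 l6 u1 u2 u3 u4 u5 u6; rewrite ea eb ec. qnorm.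
set x := q ^+ M. set y := q ^+ N. move=> l1 l2 l3 l4 l5 l6 u1 u2 u3 u4 u5 u6.
have hx : x != 0 by rewrite expf_neq0.
have hy : y != 0 by rewrite expf_neq0.
have hq4' : q ^+ 4 - 1 != 0 by rewrite subr_eq0.
have nA : bv a * x ^+ 2 * (q * (r0 * bv b)) + bv c != 0 by nz u4 (r0^+2 * bv b * bv c)^-1.
have nE : bv b + bv c * (r0 * bv a * (x ^+ 2 * q)) != 0 by nz l4 (r0^+3 * bv a * bv b * bv c * q)^-1.
have nF : 1 + - (bv a * (x ^+ 4 * (q * q))) * (r0 ^+ 2 * bv a) != 0 by nz u6 (r0^+2 * bv a)^-1.
have nG : 1 + - (bv a * x ^+ 4) * (r0 ^+ 2 * bv a) != 0 by nz u5 (r0^+2 * bv a)^-1.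
have nD : (q * q) ^+ 2 - 1 != 0 by nz hq4' (1:C).
field; by rewrite ?hq ?hr ?ha ?hb ?hc ?hx ?hy ?nA ?nE ?nF ?nG ?nD.
Qed.

Lemma id3mid (C : fieldType) (q r0 : C) (N : nat) (bv cv : label -> C) (a b c : label) (M : nat) :
  q != 0 -> r0 != 0 -> bv a != 0 -> bv b != 0 -> bv c != 0 ->
  cv a = (r0^+2 * bv a)^-1 -> cv b = (r0^+2 * bv b)^-1 -> cv c = (r0^+2 * bv c)^-1 ->
  q ^+ 2 != 1 -> q ^+ 4 != 1 ->
  coef_low q r0 N (bv a) (cv a) (bv b) (cv b) (bv c) (cv c) M%:Z != 0 ->
  coef_up q r0 N (bv a) (cv a) (bv b) (cv b) (bv c) (cv c) (M%:Z + 1) != 0 ->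
 r0/(q^+2 - q^-2) * (q - q^-1) * theta q bv cv a M%:Z * 
   ((bv b + cv b) - coef_up q r0 N (bv a) (cv a) (bv b) (cv b) (bv c) (cv c) (M%:Z + 1)
     - coef_low q r0 N (bv a) (cv a) (bv b) (cv b) (bv c) (cv c) M%:Z)
  + r0 * omega q r0 N bv cv a b c / ((q - q^-1) * (q^+2 - q^-2))
 = (bv c + cv c) - coef_up q r0 N (bv a) (cv a) (bv c) (cv c) (q ^ (- (2 * N%:Z)) * cv b) (q ^ (2 * N%:Z) * bv b) (M%:Z + 1)
     - coef_low q r0 N (bv a) (cv a) (bv c) (cv c) (q ^ (- (2 * N%:Z)) * cv b) (q ^ (2 * N%:Z) * bv b) M%:Z.
Proof.
move=> hq hr ha hb hc ea eb ec hq2 hq4 /coef_low_nz[l1 l2 l3 [l4 l5 l6]] /coef_up_nz[u1 u2 u3 [u4 u5 u6]].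
rewrite /coef_low /coef_up /omega /theta /thetaE ea eb ec.
move: l1 l2 l3 l4 l5 l6 u1 u2 u3 u4 u5 u6; rewrite ea eb ec. qnorm.
set x := q ^+ M. set y := q ^+ N. move=> l1 l2 l3 l4 l5 l6 u1 u2 u3 u4 u5 u6.
have hx : x != 0 by rewrite expf_neq0.
have hy : y != 0 by rewrite expf_neq0.
have hq4' : q ^+ 4 - 1 != 0 by rewrite subr_eq0.
have hq2' : q ^+ 2 - 1 != 0 by rewrite subr_eq0.
have nD : (q * q) ^+ 2 - 1 != 0 by nz hq4' (1:C).
have nE : q * q - 1 != 0 by nz hq2' (1:C).
have nA : 1 + - (bv a * x ^+ 4) * (r0 ^+ 2 * bv a) != 0 by nz l6 (r0^+2 * bv a)^-1.
have nB : q * q + - (bv a * x ^+ 4) * (r0 ^+ 2 * bv a) != 0 by nz l5 (r0^+2 * bv a * q^+2)^-1.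
have nC : 1 + - (bv a * (x ^+ 4 * (q * q))) * (r0 ^+ 2 * bv a) != 0 by nz u6 (r0^+2 * bv a)^-1.
field; by rewrite ?hq ?hr ?ha ?hb ?hc ?hx ?hy ?nA ?nB ?nC ?nD ?nE ?oner_neq0.
Qed.

Lemma id3zero (C : fieldType) (q r0 : C) (N : nat) (bv cv : label -> C) (a b c : label) :
  q != 0 -> r0 != 0 -> bv a != 0 -> bv b != 0 -> bv c != 0 ->
  cv a = (r0^+2 * bv a)^-1 -> cv b = (r0^+2 * bv b)^-1 -> cv c = (r0^+2 * bv c)^-1 ->
  q ^+ 2 != 1 -> q ^+ 4 != 1 ->
  coef_up q r0 N (bv a) (cv a) (bv b) (cv b) (bv c) (cv c) (0%:Z + 1) != 0 ->
 r0/(q^+2 - q^-2) * (q - q^-1) * theta q bv cv a 0%:Z * 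
   ((bv b + cv b) - coef_up q r0 N (bv a) (cv a) (bv b) (cv b) (bv c) (cv c) (0%:Z + 1))
  + r0 * omega q r0 N bv cv a b c / ((q - q^-1) * (q^+2 - q^-2))
 = (bv c + cv c) - coef_up q r0 N (bv a) (cv a) (bv c) (cv c) (q ^ (- (2 * N%:Z)) * cv b) (q ^ (2 * N%:Z) * bv b) (0%:Z + 1).
Proof.
move=> hq hr ha hb hc ea eb ec hq2 hq4 /coef_up_nz[u1 u2 u3 [u4 u5 u6]].
rewrite /coef_low /coef_up /omega /theta /thetaE ea eb ec.
move: u1 u2 u3 u4 u5 u6; rewrite ea eb ec. qnorm.
set y := q ^+ N. move=> u1 u2 u3 u4 u5 u6.
have hy : y != 0 by rewrite expf_neq0.
have hq4' : q ^+ 4 - 1 != 0 by rewrite subr_eq0.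
have hq2' : q ^+ 2 - 1 != 0 by rewrite subr_eq0.
have nD : (q * q) ^+ 2 - 1 != 0 by nz hq4' (1:C).
have nE : q * q - 1 != 0 by nz hq2' (1:C).
have nA : 1 + - (bv a * (q * q)) * (r0 ^+ 2 * bv a) != 0 by nz u6 (r0^+2 * bv a)^-1.
have nB : 1 + - bv a * (r0 ^+ 2 * bv a) != 0 by nz u5 (r0^+2 * bv a)^-1.
field; by rewrite ?hq ?hr ?ha ?hb ?hc ?hx ?hy ?nA ?nB ?nC ?nD ?nE ?oner_neq0.
Qed.

Lemma id3top (C : fieldType) (q r0 : C) (N : nat) (bv cv : label -> C) (a b c : label) :
  q != 0 -> r0 != 0 -> bv a != 0 -> bv b != 0 -> bv c != 0 ->
  cv a = (r0^+2 * bv a)^-1 -> cv b = (r0^+2 * bv b)^-1 -> cv c = (r0^+2 * bv c)^-1 ->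
  q ^+ 2 != 1 -> q ^+ 4 != 1 ->
  coef_low q r0 N (bv a) (cv a) (bv b) (cv b) (bv c) (cv c) N%:Z != 0 ->
 r0/(q^+2 - q^-2) * (q - q^-1) * theta q bv cv a N%:Z * 
   ((bv b + cv b) - coef_low q r0 N (bv a) (cv a) (bv b) (cv b) (bv c) (cv c) N%:Z)
  + r0 * omega q r0 N bv cv a b c / ((q - q^-1) * (q^+2 - q^-2))
 = (bv c + cv c) - coef_low q r0 N (bv a) (cv a) (bv c) (cv c) (q ^ (- (2 * N%:Z)) * cv b) (q ^ (2 * N%:Z) * bv b) N%:Z.
Proof.
move=> hq hr ha hb hc ea eb ec hq2 hq4 /coef_low_nz[l1 l2 l3 [l4 l5 l6]].
rewrite /coef_low /coef_up /omega /theta /thetaE ea eb ec.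
move: l1 l2 l3 l4 l5 l6; rewrite ea eb ec. qnorm.
set y := q ^+ N. move=> l1 l2 l3 l4 l5 l6.
have hy : y != 0 by rewrite expf_neq0.
have hq4' : q ^+ 4 - 1 != 0 by rewrite subr_eq0.
have hq2' : q ^+ 2 - 1 != 0 by rewrite subr_eq0.
have nD : (q * q) ^+ 2 - 1 != 0 by nz hq4' (1:C).
have nE : q * q - 1 != 0 by nz hq2' (1:C).
have nA : 1 + - (bv a * y ^+ 4) * (r0 ^+ 2 * bv a) != 0 by nz l6 (r0^+2 * bv a)^-1.
have nB : q * q + - (bv a * y ^+ 4) * (r0 ^+ 2 * bv a) != 0 by nz l5 (r0^+2 * bv a * q^+2)^-1.
field; by rewrite ?hq ?hr ?ha ?hb ?hc ?hx ?hy ?nA ?nB ?nC ?nD ?nE ?oner_neq0.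
Qed.

Lemma id3nil (C : fieldType) (q r0 : C) (bv cv : label -> C) (a b c : label) :
  q != 0 -> r0 != 0 -> bv a != 0 -> bv b != 0 -> bv c != 0 ->
  cv a = (r0^+2 * bv a)^-1 -> cv b = (r0^+2 * bv b)^-1 -> cv c = (r0^+2 * bv c)^-1 ->
  q ^+ 2 != 1 -> q ^+ 4 != 1 ->
 r0/(q^+2 - q^-2) * (q - q^-1) * theta q bv cv a 0%:Z * (bv b + cv b)
  + r0 * omega q r0 0 bv cv a b c / ((q - q^-1) * (q^+2 - q^-2))
 = (bv c + cv c).
Proof.
move=> hq hr ha hb hc ea eb ec hq2 hq4.
rewrite /omega /theta /thetaE ea eb ec.
qnorm.
have hq4' : q ^+ 4 - 1 != 0 by rewrite subr_eq0.
have hq2' : q ^+ 2 - 1 != 0 by rewrite subr_eq0.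
have nD : (q * q) ^+ 2 - 1 != 0 by nz hq4' (1:C).
have nE : q * q - 1 != 0 by nz hq2' (1:C).
field; by rewrite ?hq ?hr ?ha ?hb ?hc ?hx ?hy ?nA ?nB ?nC ?nD ?nE ?oner_neq0.
Qed.
Definition lc (C : fieldType) (V : lmodType C) (W : V * V * V) (a1 a2 a3 : C) : V :=
  a1 *: W.1.1 + a2 *: W.1.2 + a3 *: W.2.
Arguments lc {C V} W a1 a2 a3.
Lemma lcD (C : fieldType) (V : lmodType C) (W : V * V * V) a1 a2 a3 b1 b2 b3 :
  lc W a1 a2 a3 + lc W b1 b2 b3 = lc W (a1 + b1) (a2 + b2) (a3 + b3).
Proof. by rewrite /lc !scalerDl addrACA -!addrA (addrCA (b1 *: _)) !addrA. Qed.
Lemma lcN (C : fieldType) (V : lmodType C) (W : V * V * V) a1 a2 a3 :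
  - lc W a1 a2 a3 = lc W (- a1) (- a2) (- a3).
Proof. by rewrite /lc !opprD !scaleNr. Qed.
Lemma lcZ (C : fieldType) (V : lmodType C) (W : V * V * V) k a1 a2 a3 :
  k *: lc W a1 a2 a3 = lc W (k * a1) (k * a2) (k * a3).
Proof. by rewrite /lc !scalerDr !scalerA. Qed.
Lemma lc_eq (C : fieldType) (V : lmodType C) (W : V * V * V) a1 a2 a3 b1 b2 b3 :
  a1 = b1 -> a2 = b2 -> a3 = b3 -> lc W a1 a2 a3 = lc W b1 b2 b3.
Proof. by move=> -> -> ->. Qed.
Lemma lc1 (C : fieldType) (V : lmodType C) (W : V * V * V) : W.1.1 = lc W 1 0 0.
Proof. by rewrite /lc scale1r !scale0r !addr0. Qed.
Lemma lc2 (C : fieldType) (V : lmodType C) (W : V * V * V) : W.1.2 = lc W 0 1 0.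
Proof. by rewrite /lc scale1r !scale0r add0r addr0. Qed.
Lemma lc3 (C : fieldType) (V : lmodType C) (W : V * V * V) : W.2 = lc W 0 0 1.
Proof. by rewrite /lc scale1r !scale0r !add0r. Qed.

Arguments lc1 {C V} W. Arguments lc2 {C V} W. Arguments lc3 {C V} W.
Opaque lc.
Lemma qcommI1 (C : fieldType) (n : nat) (q : C) (X Y : 'M[C]_n) : q != 0 ->
  qcomm q X (qcomm q Y X) = - qcomm q^-1 X (qcomm q X Y).
Proof.
move=> hq.
rewrite /qcomm !mulmxBr !mulmxBl -!scalemxAr -!scalemxAl !mulmxA ?scalerA ?invrK.
set W := (X *m Y *m X, X *m X *m Y, Y *m X *m X).
rewrite [X *m Y *m X](lc1 W) [X *m X *m Y](lc2 W) [Y *m X *m X](lc3 W).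
rewrite ?(lcZ, lcN, lcD); apply: lc_eq; by field.
Qed.

Lemma qcommI2 (C : fieldType) (n : nat) (q : C) (X Y : 'M[C]_n) : q != 0 ->
  qcomm q (qcomm q X Y) X = - qcomm q^-1 X (qcomm q X Y).
Proof.
move=> hq.
rewrite /qcomm !mulmxBr !mulmxBl -!scalemxAr -!scalemxAl !mulmxA ?scalerA ?invrK.
set W := (X *m Y *m X, X *m X *m Y, Y *m X *m X).
rewrite [X *m Y *m X](lc1 W) [X *m X *m Y](lc2 W) [Y *m X *m X](lc3 W).
rewrite ?(lcZ, lcN, lcD); apply: lc_eq; by field.
Qed.

Lemma qcommDl (C : fieldType) (n : nat) (q k c : C) (X Y : 'M[C]_n.+1) :
  qcomm q (k *: Y + c%:M) X = k *: qcomm q Y X + (c * (q - q^-1)) *: X.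
Proof.
rewrite /qcomm mulmxDl mulmxDr mul_scalar_mx mul_mx_scalar -scalemxAl -scalemxAr.
set W := (Y *m X, X *m Y, X).
rewrite [Y *m X](lc1 W) [X *m Y](lc2 W) [X](lc3 W).
rewrite ?(lcZ, lcN, lcD); apply: lc_eq; ring.
Qed.

Lemma qcommDr (C : fieldType) (n : nat) (q k c : C) (X Y : 'M[C]_n.+1) :
  qcomm q X (k *: Y + c%:M) = k *: qcomm q X Y + (c * (q - q^-1)) *: X.
Proof.
rewrite /qcomm mulmxDl mulmxDr mul_scalar_mx mul_mx_scalar -scalemxAl -scalemxAr.
set W := (Y *m X, X *m Y, X).
rewrite [Y *m X](lc1 W) [X *m Y](lc2 W) [X](lc3 W).
rewrite ?(lcZ, lcN, lcD); apply: lc_eq; ring.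
Qed.

Lemma omega_sym (C : fieldType) (q r0 : C) N (bv cv : label -> C) x y z :
  omega q r0 N bv cv x y z = omega q r0 N bv cv y x z.
Proof. by rewrite /omega; congr (_ * (_ - _)); exact: mulrC. Qed.

Lemma cyc2 (C : fieldType) (q r0 : C) N (bv cv : label -> C) (A As : 'M[C]_N.+1) :
  q != 0 -> r0 != 0 -> q ^+ 2 != 1 -> q ^+ 4 != 1 -> 
  qcomm q^-1 As (qcomm q As A) = (- (q ^+ 2 - q ^- 2) ^+ 2 / r0 ^+ 2) *: A
      + omega q r0 N bv cv Lstar Ldot Ldiam *: As
      + ((q + q^-1) / r0 * omega q r0 N bv cv Lstar Ldiam Ldot)%:M ->
  A = (r0 / (q ^+ 2 - q ^- 2)) *: qcomm q ((r0 / (q ^+ 2 - q ^- 2)) *: qcomm q As A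
      + (r0 * omega q r0 N bv cv Ldot Lstar Ldiam / ((q - q^-1) * (q ^+ 2 - q ^- 2)))%:M) As
     + (r0 * omega q r0 N bv cv Lstar Ldiam Ldot / ((q - q^-1) * (q ^+ 2 - q ^- 2)))%:M.
Proof.
move=> hq hr hq2 hq4 hw.
have hq4'' : (q * q) ^+ 2 - 1 != 0 by rewrite -expr2 -exprM subr_eq0.
have hq2'' : q * q - 1 != 0 by rewrite -expr2 subr_eq0.
rewrite qcommDl qcommI2 // hw [omega _ _ _ _ _ Lstar Ldot _]omega_sym.
rewrite -![(_ * _)%:M]scalemx1.
set W := (As, A, (1%:M : 'M[C]_N.+1)).
rewrite [As](lc1 W) [A](lc2 W) [1%:M](lc3 W).
rewrite ?(lcZ, lcN, lcD); apply: lc_eq; field; by rewrite ?hq ?hr ?hq4'' ?hq2''.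
Qed.

Lemma cyc3 (C : fieldType) (q r0 : C) N (bv cv : label -> C) (A As : 'M[C]_N.+1) :
  q != 0 -> r0 != 0 -> q ^+ 2 != 1 -> q ^+ 4 != 1 -> 
  qcomm q^-1 A (qcomm q A As) = (- (q ^+ 2 - q ^- 2) ^+ 2 / r0 ^+ 2) *: As
      + omega q r0 N bv cv Ldot Lstar Ldiam *: A
      + ((q + q^-1) / r0 * omega q r0 N bv cv Ldot Ldiam Lstar)%:M ->
  As = (r0 / (q ^+ 2 - q ^- 2)) *: qcomm q A ((r0 / (q ^+ 2 - q ^- 2)) *: qcomm q As A
      + (r0 * omega q r0 N bv cv Ldot Lstar Ldiam / ((q - q^-1) * (q ^+ 2 - q ^- 2)))%:M)
     + (r0 * omega q r0 N bv cv Ldiam Ldot Lstar / ((q - q^-1) * (q ^+ 2 - q ^- 2)))%:M.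
Proof.
move=> hq hr hq2 hq4 hw.
have hq4'' : (q * q) ^+ 2 - 1 != 0 by rewrite -expr2 -exprM subr_eq0.
have hq2'' : q * q - 1 != 0 by rewrite -expr2 subr_eq0.
rewrite qcommDr qcommI1 // hw [omega _ _ _ _ _ Ldiam Ldot _]omega_sym.
rewrite -![(_ * _)%:M]scalemx1.
set W := (As, A, (1%:M : 'M[C]_N.+1)).
rewrite [As](lc1 W) [A](lc2 W) [1%:M](lc3 W).
rewrite ?(lcZ, lcN, lcD); apply: lc_eq; field; by rewrite ?hq ?hr ?hq4'' ?hq2''.
Qed.

Lemma cyc_rel (C : fieldType) (q r0 : C) N (bv cv : label -> C) (A As : 'M[C]_N.+1) a b c :
  q != 0 -> r0 != 0 -> q ^+ 2 != 1 -> q ^+ 4 != 1 -> AW q r0 bv cv A As -> cyclic3 a b c ->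
  Aop q r0 bv cv A As c = (r0 / (q ^+ 2 - q ^- 2)) *: qcomm q (Aop q r0 bv cv A As b) (Aop q r0 bv cv A As a)
     + (r0 * omega q r0 N bv cv a b c / ((q - q^-1) * (q ^+ 2 - q ^- 2)))%:M.
Proof.
move=> hq hr hq2 hq4 hAW.
case=> [[-> -> ->]|[[-> -> ->]|[-> -> ->]]].
- exact: erefl.
 - exact: (@cyc2 C q r0 N bv cv A As hq hr hq2 hq4 (hAW Lstar Ldot ltac:(by []))).
 - exact: (@cyc3 C q r0 N bv cv A As hq hr hq2 hq4 (hAW Ldot Lstar ltac:(by []))).
Qed.
Set Implicit Arguments. Unset Strict Implicit.
Lemma colmx_delta (C : fieldType) n (v : nat -> 'cV[C]_n) (k : 'I_n) :
  colmx v *m delta_mx k 0 = v k.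
Proof.
apply/matrixP => r z; rewrite !mxE (bigD1 k) //= big1 => [|l hl].
  by rewrite !mxE !eqxx (ord1 z) /= mulr1 addr0.
by rewrite !mxE (negbTE hl) mulr0.
Qed.

Lemma inv_col (C : fieldType) n (v : nat -> 'cV[C]_n) (k : 'I_n) :
  colmx v \in unitmx -> invmx (colmx v) *m v k = delta_mx k 0.
Proof. by move=> hV; rewrite -colmx_delta mulmxA mulVmx // mul1mx. Qed.

Lemma mx_col (C : fieldType) n (X : 'M[C]_n) (v : nat -> 'cV[C]_n) i j :
  (X *m colmx v) i j = (X *m v j) i 0.
Proof. by rewrite !mxE; apply: eq_bigr => k _; rewrite mxE. Qed.

Lemma eig_mx (C : fieldType) n (B : 'M[C]_n) (v : nat -> 'cV[C]_n) th :
  eigen_seq B v th -> B *m colmx v = colmx v *m diag_mx (\row_j th (nat_of_ord j)).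
Proof.
move=> he; apply/matrixP => r j.
by rewrite mx_col (he _ (ltn_ord j)) mul_mx_diag !mxE mulrC.
Qed.

Lemma comm_P (C : fieldType) n (B : 'M[C]_n) (V V' D : 'M[C]_n) :
  V \in unitmx -> B *m V = V *m D -> B *m V' = V' *m D ->
  D *m (invmx V *m V') = (invmx V *m V') *m D.
Proof.
move=> hV e1 e2.
have eD : D = invmx V *m B *m V by rewrite -mulmxA e1 mulmxA mulVmx // mul1mx.
by rewrite -mulmxA -e2 {1}eD -!mulmxA (mulmxA V) mulmxV // mul1mx.
Qed.

Lemma diag_off (C : fieldType) n (d : 'rV[C]_n) (P : 'M[C]_n) i j :
  diag_mx d *m P = P *m diag_mx d -> d 0 i != d 0 j -> P i j = 0.
Proof.
move=> /matrixP /(_ i j); rewrite mul_mx_diag mul_diag_mx !mxE => e hd.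
apply/eqP; apply: contraNT hd => hP; apply/eqP; apply: (mulIf hP).
by rewrite e mulrC.
Qed.

Lemma kernel_tridiag (C : fieldType) n (T : 'M[C]_n.+1) (y : 'cV[C]_n.+1) (lam : C) :
  irred_tridiag T -> T *m y = lam *: y -> y ord0 0 = 0 -> y = 0.
Proof.
move=> [hz hnz] hy y0.
have claim : forall k (l : 'I_n.+1), (l <= k)%N -> y l 0 = 0.
  elim=> [|k IH] l hl.
    by have -> : l = ord0 by apply/val_inj; rewrite /=; lia.
  case: (leqP l k) => hlk; first exact: IH.
  have hl' : (l : nat) = k.+1 by lia.
  have hk : (k < n.+1)%N by have := ltn_ord l; lia.
  pose i := Ordinal hk.
  move/matrixP: hy => /(_ i 0); rewrite !mxE (IH i (leqnn k)) mulr0 (bigD1 l) //= big1.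
    rewrite addr0 => /eqP; rewrite mulf_eq0 => /orP[|/eqP //].
    by rewrite (negbTE (hnz i l _)) //= hl' eqxx.
  move=> m hm; case: (leqP m k) => hmk; first by rewrite (IH m hmk) mulr0.
  rewrite hz ?mul0r //; left; rewrite /=.
  have : (m : nat) != (l : nat) by apply: contraNneq hm => e; apply/eqP/val_inj.
  rewrite hl'; lia.
apply/matrixP => r z; rewrite (ord1 z) mxE; apply: (claim n); by have := ltn_ord r; lia.
Qed.

Lemma unit_ker (C : fieldType) n (U : 'M[C]_n) (x : 'cV[C]_n) :
  U \in unitmx -> U *m x = 0 -> x = 0.
Proof. by move=> hU e; rewrite -(mulKmx hU x) e mulmx0. Qed.

Lemma eig_distinct (C : fieldType) n (B : 'M[C]_n.+1) (v w : nat -> 'cV[C]_n.+1) th :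
  colmx v \in unitmx -> colmx w \in unitmx -> eigen_seq B v th ->
  irred_tridiag (mx_in_basis B w) ->
  forall i j : 'I_n.+1, i != j -> th i != th j.
Proof.
move=> hV hW he hT i j hij; apply/eqP => eth.
set W := colmx w.
have eigT : forall k : 'I_n.+1, mx_in_basis B w *m (invmx W *m v k) = th k *: (invmx W *m v k).
  move=> k; rewrite /mx_in_basis -/W -!mulmxA (mulmxA W) mulmxV // mul1mx.
  by rewrite (he _ (ltn_ord k)) -scalemxAr.
set U := invmx W *m colmx v.
have hU : U \in unitmx by rewrite unitmx_mul unitmx_inv hW hV.
have ey : forall k : 'I_n.+1, invmx W *m v k = U *m delta_mx k 0.
  by move=> k; rewrite -mulmxA colmx_delta.
have eY := eigT i. have eZ := eigT j. have yY := ey i. have zZ := ey j.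
move: (invmx W *m v i) (invmx W *m v j) eY eZ yY zZ => Y Z eY eZ yY zZ.
rewrite eth in eY.
set y0 := Y ord0 0. set z0 := Z ord0 0.
have hu : z0 *: Y - y0 *: Z = 0.
  apply: (@kernel_tridiag _ _ _ _ (th j) hT).
    by rewrite mulmxBr -!scalemxAr eY eZ !scalerA mulrC [y0 * _]mulrC scalerBr !scalerA.
  by rewrite !mxE -/y0 -/z0 mulrC subrr.
have hx : z0 *: delta_mx i 0 - y0 *: delta_mx j 0 = 0 :> 'cV[C]_n.+1.
  apply: (@unit_ker _ _ U); first exact: hU. rewrite mulmxBr -!scalemxAr -yY -zZ; exact: hu.
have z00 : z0 = 0.
  by move/matrixP: hx => /(_ i 0); rewrite !mxE !eqxx (negbTE hij) /= mulr1 mulr0 subr0.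
have y00 : y0 = 0.
  move/matrixP: hx => /(_ j 0); rewrite !mxE !eqxx eq_sym (negbTE hij) /= mulr1 mulr0 sub0r.
  by move/eqP; rewrite oppr_eq0 => /eqP.
have yz : Y = 0 by exact: (@kernel_tridiag _ _ _ Y (th j) hT eY y00).
have : delta_mx i 0 = 0 :> 'cV[C]_n.+1 by apply: (@unit_ker _ _ U); [exact: hU | rewrite -yY].
by move/matrixP => /(_ i 0); rewrite !mxE !eqxx /=; move/eqP; rewrite oner_eq0.
Qed.

Lemma diag3 (C : fieldType) n (Q T P : 'M[C]_n) i j :
  (forall k l, k != l -> Q k l = 0) -> (forall k l, k != l -> P k l = 0) ->
  (Q *m T *m P) i j = Q i i * T i j * P j j.
Proof.
move=> hQ hP.
rewrite !mxE (bigD1 j) //= big1 => [|k hk]; last by rewrite hP ?mulr0.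
rewrite addr0 !mxE (bigD1 i) //= big1 => [|k hk]; last by rewrite hQ 1?eq_sym ?mul0r.
by rewrite addr0.
Qed.

Lemma Tm_low (C : fieldType) n (B : 'M[C]_n.+1) (v : nat -> 'cV[C]_n.+1) (T : int -> int -> C)
    (i j : 'I_n.+1) :
  colmx v \in unitmx -> acts_tridiag B v T -> (i : nat) = j.+1 ->
  (invmx (colmx v) *m B *m colmx v) i j = T i j.
Proof.
move=> hV hT hij.
rewrite mx_col -mulmxA (hT _ (ltn_ord j)) !mulmxDr -!scalemxAr.
have hj1 : (j.+1 < n.+1)%N by rewrite -hij.
have hjm : (j.-1 < n.+1)%N by have := ltn_ord j; lia.
rewrite (@inv_col _ _ v (Ordinal hj1) hV) (@inv_col _ _ v j hV) (@inv_col _ _ v (Ordinal hjm) hV).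
rewrite !mxE /= -!val_eqE /= hij !eqxx /=.
have -> : (j.+1 == j) = false by rewrite gtn_eqF.
have -> : (j.+1 == j.-1) = false by apply/negbTE; lia.
by rewrite /= !mulr0 !addr0 mulr1.
Qed.

Lemma Tm_up (C : fieldType) n (B : 'M[C]_n.+1) (v : nat -> 'cV[C]_n.+1) (T : int -> int -> C)
    (i j : 'I_n.+1) :
  colmx v \in unitmx -> acts_tridiag B v T -> T (n.+1)%:Z n%:Z = 0 -> (j : nat) = i.+1 ->
  (invmx (colmx v) *m B *m colmx v) i j = T ((j : nat)%:Z - 1) j.
Proof.
move=> hV hT hTn hij.
rewrite mx_col -mulmxA (hT _ (ltn_ord j)) !mulmxDr -!scalemxAr.
have hjm : (j.-1 < n.+1)%N by have := ltn_ord j; lia.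
rewrite (@inv_col _ _ v j hV) (@inv_col _ _ v (Ordinal hjm) hV).
case: (ltnP j.+1 n.+1) => hj1.
  rewrite (@inv_col _ _ v (Ordinal hj1) hV) !mxE /= -!val_eqE /= hij /=.
  have -> : ((i : nat) == i.+2) = false by apply/negbTE; lia.
  have -> : ((i : nat) == i.+1) = false by apply/negbTE; lia.
  by rewrite !mulr0 !add0r andbT (introT eqP (erefl _)) mulr1.
have ejn : (j : nat) = n by have := ltn_ord j; lia.
have -> : T (j.+1)%:Z j%:Z = 0 by rewrite ejn.
rewrite scale0r add0r !mxE /= -!val_eqE /= hij /=.
have -> : ((i : nat) == i.+1) = false by apply/negbTE; lia.
by rewrite !mulr0 !add0r andbT (introT eqP (erefl _)) mulr1.
Qed.


Lemma offdiag_nz (C : fieldType) n (Ba Bb : 'M[C]_n.+1) (v v' w' : nat -> 'cV[C]_n.+1)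
    (th : nat -> C) (T : int -> int -> C) :
  colmx v \in unitmx -> colmx v' \in unitmx -> colmx w' \in unitmx ->
  eigen_seq Ba v th -> eigen_seq Ba v' th -> irred_tridiag (mx_in_basis Ba w') ->
  acts_tridiag Bb v T -> irred_tridiag (mx_in_basis Bb v') ->
  T (n.+1)%:Z n%:Z = 0 ->
  forall j : nat, (j < n)%N -> T (j.+1)%:Z j%:Z != 0 /\ T ((j.+1)%:Z - 1) (j.+1)%:Z != 0.
Proof.
move=> hV hV' hW heV heV' hTa hact hTb hTn j hj.
have hdist := eig_distinct hV hW heV hTa.
set V := colmx v; set V' := colmx v'.
pose D : 'M[C]_n.+1 := diag_mx (\row_k th (nat_of_ord k)).
have e1 : Ba *m V = V *m D by exact: eig_mx.
have e2 : Ba *m V' = V' *m D by exact: eig_mx.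
have hP : forall k l : 'I_n.+1, k != l -> (invmx V *m V') k l = 0.
  move=> k l hkl; apply: (diag_off (comm_P hV e1 e2)); rewrite !mxE; exact: hdist.
have hQ : forall k l : 'I_n.+1, k != l -> (invmx V' *m V) k l = 0.
  move=> k l hkl; apply: (diag_off (comm_P hV' e2 e1)); rewrite !mxE; exact: hdist.
have eB : mx_in_basis Bb v' = (invmx V' *m V) *m (invmx V *m Bb *m V) *m (invmx V *m V').
  by rewrite /mx_in_basis -/V' !mulmxA mulmxK // mulmxK.
have hj1 : (j.+1 < n.+1)%N by lia.
have hj0 : (j < n.+1)%N by lia.
pose jo := Ordinal hj0; pose j1 := Ordinal hj1.
move: hTb => [_ hnz].
split.
- have := hnz j1 jo; rewrite /= eqxx orbT => /(_ isT).
  rewrite eB diag3 // (@Tm_low _ _ Bb v T j1 jo hV hact erefl).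
  by rewrite !mulf_eq0 !negb_or => /andP[/andP[_ ->]].
- have := hnz jo j1; rewrite /= eqxx => /(_ isT).
  rewrite eB diag3 // (@Tm_up _ _ Bb v T jo j1 hV hact hTn erefl).
  by rewrite !mulf_eq0 !negb_or => /andP[/andP[_ ->]].
Qed.
Lemma in_range_nat (N m : nat) : in_range N m%:Z = (m <= N)%N.
Proof. by rewrite /in_range lez_nat le0z_nat. Qed.

Lemma in_range_m1 (N : nat) : in_range N (0%:Z - 1) = false.
Proof. by []. Qed.


Lemma coefT_low (C : fieldType) (q r0 : C) N ba ca bb cb bc cc (M : nat) : (M < N)%N ->
  coefT q r0 N ba ca bb cb bc cc (M.+1)%:Z M%:Z = coef_low q r0 N ba ca bb cb bc cc (M.+1)%:Z.
Proof.
move=> h; by rewrite /coefT !in_range_nat h ltnW //= PoszS' eqxx.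
Qed.

Lemma coefT_up (C : fieldType) (q r0 : C) N ba ca bb cb bc cc (M : nat) : (M < N)%N ->
  coefT q r0 N ba ca bb cb bc cc ((M.+1)%:Z - 1) (M.+1)%:Z = coef_up q r0 N ba ca bb cb bc cc (M.+1)%:Z.
Proof.
move=> h; rewrite PoszS' addrK /coefT -PoszS' !in_range_nat h ltnW //=.
have -> : (M%:Z == (M.+1)%:Z + 1) = false by apply/negbTE; rewrite PoszS'; lia.
by rewrite PoszS' eqxx.
Qed.

Lemma coefT_diag (C : fieldType) (q r0 : C) N ba ca bb cb bc cc (M : nat) : (M <= N)%N ->
  coefT q r0 N ba ca bb cb bc cc M%:Z M%:Z = coef_diag q r0 N ba ca bb cb bc cc M%:Z.
Proof.
move=> h; rewrite /coefT !in_range_nat h /=.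
have -> : (M%:Z == M%:Z + 1) = false by apply/negbTE; lia.
by rewrite eqxx.
Qed.

Lemma coefT_outN (C : fieldType) (q r0 : C) N ba ca bb cb bc cc :
  coefT q r0 N ba ca bb cb bc cc (N.+1)%:Z N%:Z = 0.
Proof. by rewrite /coefT in_range_nat ltnn. Qed.

Lemma coefT_out0 (C : fieldType) (q r0 : C) N ba ca bb cb bc cc :
  coefT q r0 N ba ca bb cb bc cc (0%:Z - 1) 0%:Z = 0.
Proof. by []. Qed.

Lemma coef_diag_eval (C : fieldType) (q r0 : C) N ba ca bb cb bc cc (M : nat) : (M <= N)%N ->
  coef_diag q r0 N ba ca bb cb bc cc M%:Z =
  (bb + cb) - (if (M < N)%N then coef_up q r0 N ba ca bb cb bc cc (M%:Z + 1) else 0)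
            - (if (0 < M)%N then coef_low q r0 N ba ca bb cb bc cc M%:Z else 0).
Proof.
move=> hMN.
have e1 : in_range N (M%:Z + 1) = (M < N)%N by rewrite -PoszS' in_range_nat.
have e2 : in_range N (M%:Z - 1) = (0 < M)%N.
  clear e1; case: M hMN => [|M] hMN //.
  by rewrite PoszS' addrK in_range_nat ltnW.
by rewrite /coef_diag e1 e2.
Qed.

Lemma combo (C : fieldType) n (x1 x0 xm : 'cV[C]_n) (k q c0 t1 t0 tm th1 th0 thm g1 g0 gm : C) :
  k * (q * th0 - q^-1 * th1) * t1 = g1 ->
  k * (q - q^-1) * th0 * t0 + c0 = g0 ->
  k * (q * th0 - q^-1 * thm) * tm = gm ->
  k *: (q *: (th0 *: (t1 *: x1 + t0 *: x0 + tm *: xm))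
        - q^-1 *: ((t1 * th1) *: x1 + (t0 * th0) *: x0 + (tm * thm) *: xm)) + c0 *: x0
  = g1 *: x1 + g0 *: x0 + gm *: xm.
Proof.
move=> <- <- <-.
set W := (x1, x0, xm).
rewrite [x1](lc1 W) [x0](lc2 W) [xm](lc3 W).
rewrite ?(lcZ, lcN, lcD); apply: lc_eq; ring.
Qed.


Theorem lemma3p3 (R : realType) (N : nat) (q r0 : R[i]) (bv cv : label -> R[i])
    (A As : 'M[R[i]]_N.+1) (a b c : label) (v w : nat -> 'cV[R[i]]_N.+1) :
  q != 0 -> not_root_of_unity q ->
  r0 != 0 -> (forall l, bv l != 0) -> (forall l, cv l != 0) ->
  r0 ^- 2 = bv Ldot * cv Ldot ->
  r0 ^- 2 = bv Lstar * cv Lstar ->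
  r0 ^- 2 = bv Ldiam * cv Ldiam ->
  AW q r0 bv cv A As ->
  cyclic3 a b c ->
  leonard_pair_ord (Aop q r0 bv cv A As a) (Aop q r0 bv cv A As b)
    (fun M => theta q bv cv a M%:Z) (fun M => theta q bv cv b M%:Z) ->
  leonard_pair_ord (Aop q r0 bv cv A As c) (Aop q r0 bv cv A As a)
    (fun M => theta q bv cv c M%:Z) (fun M => theta q bv cv a M%:Z) ->
  attached_bases q r0 bv cv A As a b c v w ->
  forall M : nat, (M <= N)%N ->
    Aop q r0 bv cv A As c *m v M =
        (Aab q r0 N bv cv c a b (M.+1)%:Z M%:Z * gauge q r0 bv cv a b c M%:Z) *: v M.+1
      + Aab q r0 N bv cv c a b M%:Z M%:Z *: v M
      + (Aab q r0 N bv cv c a b (M%:Z - 1) M%:Z / gauge q r0 bv cv a b c (M%:Z - 1))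
          *: v M.-1.
Proof.
move=> hq hroot hr hbv hcv r1 r2 r3 hAW hcyc [[v' [hv' [hev' hirrv']]] [w' [hw' [_ hirrw']]]] _.
move=> [hV [_ [heV [hact _]]]] M hM.
have hq2 : q ^+ 2 != 1 by exact: hroot.
have hq4 : q ^+ 4 != 1 by exact: hroot.
have ecv : forall l, cv l = (r0 ^+ 2 * bv l)^-1.
  move=> l; have e : r0 ^- 2 = bv l * cv l by case: l.
  by rewrite invfM e mulrC mulrA mulVf // mul1r.
have ha := hbv a; have hb := hbv b; have hc := hbv c.
have ea := ecv a; have eb := ecv b; have ec := ecv c.
have hM' : (M < N.+1)%N by [].
have hTn : Aba q r0 N bv cv a b c (N.+1)%:Z N%:Z = 0 by rewrite /Aba coefT_outN.
have hnz := offdiag_nz hV hv' hw' heV hev' hirrw' hact hirrv' hTn.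
have nzlow : forall j, (j < N)%N ->
    coef_low q r0 N (bv a) (cv a) (bv b) (cv b) (bv c) (cv c) (j.+1)%:Z != 0.
  by move=> j hj; have [+ _] := hnz j hj; rewrite /Aba coefT_low.
have nzup : forall j, (j < N)%N ->
    coef_up q r0 N (bv a) (cv a) (bv b) (cv b) (bv c) (cv c) (j.+1)%:Z != 0.
  by move=> j hj; have [_ +] := hnz j hj; rewrite /Aba coefT_up.
set k := r0 / (q ^+ 2 - q ^- 2).
set c0 := r0 * omega q r0 N bv cv a b c / ((q - q^-1) * (q ^+ 2 - q ^- 2)).
set t1 := Aba q r0 N bv cv a b c (M.+1)%:Z M%:Z.
set t0 := Aba q r0 N bv cv a b c M%:Z M%:Z.
set tm := Aba q r0 N bv cv a b c (M%:Z - 1) M%:Z.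
have E1 : k * (q * theta q bv cv a M%:Z - q^-1 * theta q bv cv a (M.+1)%:Z) * t1
    = Aab q r0 N bv cv c a b (M.+1)%:Z M%:Z * gauge q r0 bv cv a b c M%:Z.
  rewrite /t1; case: (ltnP M N) => hMN.
    rewrite /Aba /Aab !coefT_low //.
    exact: (@id1 _ q r0 N bv cv a b c M hq hr ha hb hc ea eb ec hq2 hq4 (nzlow M hMN) (nzup M hMN)).
  have -> : M = N by apply/eqP; rewrite eqn_leq hM hMN.
  by rewrite /Aba /Aab !coefT_outN !mulr0 mul0r.
have Em : k * (q * theta q bv cv a M%:Z - q^-1 * theta q bv cv a (M%:Z - 1)) * tm
    = Aab q r0 N bv cv c a b (M%:Z - 1) M%:Z / gauge q r0 bv cv a b c (M%:Z - 1).
  rewrite /tm; case: M hM {hM' t1 t0 tm E1} => [|M] hM.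
    by rewrite /Aba /Aab !coefT_out0 mulr0 mul0r.
  rewrite /Aba /Aab !coefT_up //.
  have -> : (M.+1)%:Z - 1 = M%:Z by rewrite PoszS' addrK.
  exact: (@id2 _ q r0 N bv cv a b c M hq hr ha hb hc ea eb ec hq2 hq4 (nzlow M hM) (nzup M hM)).
have E0 : k * (q - q^-1) * theta q bv cv a M%:Z * t0 + c0 = Aab q r0 N bv cv c a b M%:Z M%:Z.
  rewrite /t0 /c0 /Aba /Aab !coefT_diag // !coef_diag_eval //.
  case: (ltnP M N) => hMN; case: M hM hM' hMN {E1 Em t1 t0 tm} => [|M] hM hM' hMN.
  - rewrite ?hMN /= ?subr0. have := nzup 0%N hMN; rewrite PoszS' => hu.
    exact: (@id3zero _ q r0 N bv cv a b c hq hr ha hb hc ea eb ec hq2 hq4 hu).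
  - rewrite ?hMN /=. have := nzup M.+1 hMN; rewrite PoszS' => hu.
    have hl := nzlow M (ltnW hMN).
    exact: (@id3mid _ q r0 N bv cv a b c M.+1 hq hr ha hb hc ea eb ec hq2 hq4 hl hu).
  - have eN : N = 0%N by apply/eqP; rewrite -leqn0.
    subst N; rewrite /= ?subr0.
    exact: (@id3nil _ q r0 bv cv a b c hq hr ha hb hc ea eb ec hq2 hq4).
  - have eMN : M.+1 = N by apply/eqP; rewrite eqn_leq hM hMN.
    subst N; rewrite ?ltnn /= ?subr0.
    have hl := nzlow M (ltnSn M).
    exact: (@id3top _ q r0 M.+1 bv cv a b c hq hr ha hb hc ea eb ec hq2 hq4 hl).
have hBa0 : Aop q r0 bv cv A As a *m v M = theta q bv cv a M%:Z *: v M := heV M hM'.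
have hBa0' : Aop q r0 bv cv A As a *m (t0 *: v M) = (t0 * theta q bv cv a M%:Z) *: v M.
  by rewrite -scalemxAr hBa0 scalerA.
have hBa1 : Aop q r0 bv cv A As a *m (t1 *: v M.+1) = (t1 * theta q bv cv a (M.+1)%:Z) *: v M.+1.
  case: (ltnP M N) => hMN.
    by rewrite -scalemxAr (heV M.+1 hMN) scalerA.
  have t10 : t1 = 0.
    rewrite /t1; have -> : M = N by apply/eqP; rewrite eqn_leq hM hMN.
    exact: hTn.
  by rewrite t10 scale0r mulmx0 mul0r scale0r.
have hBam : Aop q r0 bv cv A As a *m (tm *: v M.-1) = (tm * theta q bv cv a (M%:Z - 1)) *: v M.-1.
  rewrite /tm; case: M hM {hM' hBa0 hBa0' hBa1 t1 t0 tm E1 E0 Em} => [|M] hM.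
    by rewrite /Aba coefT_out0 scale0r mulmx0 mul0r scale0r.
  have hM1 : (M < N.+1)%N by apply: ltnW.
  rewrite -scalemxAr (heV M hM1) scalerA.
  by have -> : (M.+1)%:Z - 1 = M%:Z by rewrite PoszS' addrK.
rewrite (@cyc_rel _ q r0 N bv cv A As a b c hq hr hq2 hq4 hAW hcyc) -/k -/c0.
rewrite mulmxDl mul_scalar_mx -scalemxAl /qcomm mulmxBl -!scalemxAl -!mulmxA.
rewrite hBa0 -scalemxAr (hact M hM') -/t1 -/t0 -/tm !mulmxDr hBa1 hBam hBa0'.
exact: (combo _ _ _ E1 E0 Em).
Qed.
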